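(* For every integer $k\ge3$, $a_{k-1}(K_{1,2k})<a_k(K_{1,2k})$, where $K_{1,2k}$ is the star graph with $2k+1$ vertices.
   Context: All graphs are finite simple graphs; $G|_I$ is the induced subgraph on $I\subseteq V(G)$. The signed $a$-number: $sa(\emptyset)=1$; if $G$ has connected components $G_1,\dots,G_\ell$, $sa(G)=\prod_k sa(G_k)$; if $G$ is connected and nonempty, $sa(G)=-\sum_{I\subsetneq V(G)}sa(G|_I)$ when $|V(G)|$ is even and $0$ when odd. $a(G)=|sa(G)|$ and $a_i(G)=\sum_{I\subseteq V(G),|I|=2i}a(G|_I)$. The star graph $K_{1,m}$ has one center vertex adjacent to each of $m$ leaves and no other edges. *)

(* Defs.v *)
From HB Require Import structures.
From mathcomp Require Import all_boot all_order all_algebra.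
Set Implicit Arguments. Unset Strict Implicit. Unset Printing Implicit Defensive.
Import GRing.Theory Num.Theory.

(* A finite simple graph is given by a vertex type T : finType and an edge
   relation e : rel T, assumed symmetric and irreflexive (the star graph
   below satisfies this).  Induced subgraphs G|_S are represented by the
   vertex subset S : {set T}; induced subgraphs of induced subgraphs are
   again induced subgraphs of G, so all recursion happens on subsets. *)

Section SignedA.
Variables (T : finType) (e : rel T).

Definition induced_rel (S : {set T}) : rel T :=
  [rel x y | [&& x \in S, y \in S & e x y]].

(* G|_S is connected (the empty graph counts as connected; handled apart) *)
Definition connectedb (S : {set T}) : bool :=
  [forall x in S, forall y in S, connect (induced_rel S) x y].

Definition components (S : {set T}) : {set {set T}} :=
  [set [set y in S | connect (induced_rel S) x y] | x in S].

(* signed a-number with fuel; fuel #|S|.+1 is always sufficient *)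
Fixpoint sa_fuel (n : nat) (S : {set T}) : int :=
  match n with
  | 0 => 1
  | n'.+1 =>
    if S == set0 then 1
    else if connectedb S then
      (if odd #|S| then 0
       else - \sum_(I in powerset S | I != S) sa_fuel n' I)
    else \prod_(C in components S) sa_fuel n' C
  end%R.

Definition sa (S : {set T}) : int := sa_fuel #|S|.+1 S.

Definition a_num (S : {set T}) : nat := `|sa S|%N.

Definition a_i (i : nat) : nat :=
  \sum_(I : {set T} | #|I| == 2 * i) a_num I.

End SignedA.

(* The star graph K_{1,m}: vertices 'I_(m.+1), center ord0, m leaves. *)
Definition star_rel (m : nat) : rel 'I_m.+1 :=
  [rel x y | (x != y) && ((x == ord0) || (y == ord0))].
Arguments star_rel m : clear implicits.

(* Main.v *)
Require Import Defs.
From mathcomp Require Import all_boot all_order all_algebra.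
From mathcomp Require Import zify ring lra.
Set Implicit Arguments. Unset Strict Implicit. Unset Printing Implicit Defensive.
Import Order.TTheory GRing.Theory Num.Theory.
Local Open Scope ring_scope.

Fixpoint sf (n j : nat) : int :=
  match n with
  | 0 => 0
  | n'.+1 => if odd j then - (1 + \sum_(i < j) ('C(j, i))%:Z * sf n' i) else 0
  end.
Definition sv (j : nat) : int := sf j.+1 j.

Lemma sf_fuel n m j : (j < n)%N -> (j < m)%N -> sf n j = sf m j.
Proof.
elim: n m j => [|n IH] [|m] j //= hn hm.
case: ifP => // _; congr (- (1 + _)); apply: eq_bigr => i _; congr (_ * _).
by apply: IH; have := ltn_ord i; lia.
Qed.

Lemma sv_even j : ~~ odd j -> sv j = 0.
Proof. by rewrite /sv /= => /negbTE ->. Qed.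

Lemma sv_odd j : odd j -> sv j = - (1 + \sum_(i < j) ('C(j, i))%:Z * sv i).
Proof.
rewrite /sv /= => ->; congr (- (1 + _)); apply: eq_bigr => i _; congr (_ * _).
by apply: (@sf_fuel j i.+1 i) => //; have := ltn_ord i; lia.
Qed.

Lemma sum_odd (f : nat -> int) n : (forall i, ~~ odd i -> f i = 0) ->
  \sum_(i < n.*2.+1) f i = \sum_(m < n) f m.*2.+1.
Proof.
move=> f0; elim: n => [|n IH]; first by rewrite big_ord1 big_ord0 f0.
rewrite doubleS (big_ord_recr n.*2.+2) (big_ord_recr n.*2.+1) /= IH big_ord_recr /= (f0 (n.*2.+2)) ?addr0 //=.
by rewrite odd_double.
Qed.

Definition sig (m : nat) : int := sv m.*2.+1.

Lemma sig_rec n : sig n = - (1 + \sum_(m < n) ('C(n.*2.+1, m.*2.+1))%:Z * sig m).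
Proof.
rewrite /sig sv_odd /= ?odd_double //; congr (- (1 + _)).
rewrite (sum_odd (f := fun i => ('C(n.*2.+1, i))%:Z * sv i)) // => i /sv_even ->.
by rewrite mulr0.
Qed.

Definition u (m : nat) : int := (-1) ^+ m.+1 * sig m.

Lemma alt_rec (y : nat -> int) n :
  \sum_(r < n.+2) (-1) ^+ (n.+1 - r) * y r =
  y n.+1 - \sum_(r < n.+1) (-1) ^+ (n - r) * y r.
Proof.
rewrite big_ord_recr /= subnn expr0 mul1r addrC; congr (_ + _).
rewrite -sumrN; apply: eq_bigr => i _.
by rewrite subSn ?exprS ?mulN1r ?mulNr // -ltnS.
Qed.

Lemma alt (y : nat -> int) n : (forall r, (r <= n)%N -> 0 <= y r) ->
  (forall r, (r < n)%N -> y r <= y r.+1) ->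
  0 <= \sum_(r < n.+1) (-1) ^+ (n - r) * y r <= y n.
Proof.
elim: n => [|n IH] hp hm.
  by rewrite big_ord1 subnn expr0 mul1r lexx andbT hp.
rewrite alt_rec.
have /andP [h1 h2] : 0 <= \sum_(r < n.+1) (-1) ^+ (n - r) * y r <= y n.
  by apply: IH => r hr; [apply: hp; lia | apply: hm; lia].
have := hm n (ltnSn n); lra.
Qed.

Lemma binS2 N r : (r.+2 * r.+1 * 'C(N, r.+2) = (N - r) * (N - r.+1) * 'C(N, r))%N.
Proof.
by rewrite mulnAC mul_bin_left -mulnA (mulnC 'C(N, r.+1)) mul_bin_left mulnA [((N - r.+1) * _)%N]mulnC.
Qed.
Lemma u_main n : 0 < u n /\
  (forall m, n = m.+1 -> ((n.*2.+1 * n.*2)%N)%:Z * u m <= 3 * u n).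
Proof.
elim/ltn_ind: n => n IH.
pose N := n.*2.+1.
pose y r := if r is m.+1 then ('C(N, m.*2.+1))%:Z * u m else 1.
have upos m : (m < n)%N -> 0 < u m by move=> h; case: (IH m h).
have ueq : u n = \sum_(r < n.+1) (-1) ^+ (n - r) * y r.
  rewrite big_ord_recl /= subn0 /u sig_rec exprS mulN1r mulrNN mulrDr mulr1 mulr_sumr.
  congr (_ + _); apply: eq_bigr => i _.
  have E : (-1) ^+ n = (-1) ^+ (n - i.+1) * (-1) ^+ i.+1 :> int.
    by rewrite -exprD subnK.
  rewrite /y /bump /= add1n E; ring.
have key m : (m.+1 < n)%N -> 4 * y m.+1 <= y m.+2.
  move=> hm; rewrite /y.
  have [_ /(_ m erefl) h] := IH m.+1 hm.
  have hb := binS2 N m.*2.+1.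
  have hu := upos m (ltnW hm); have hu' := upos m.+1 hm.
  have hQ : (12 <= (N - m.*2.+1) * (N - m.*2.+2))%N.
    rewrite /N; nia.
  move: h hb hu hu' hQ; rewrite !doubleS.
  set a := 'C(N, m.*2.+1); set b := 'C(N, m.*2.+3).
  set Q := ((N - m.*2.+1) * (N - m.*2.+2))%N.
  move=> h hb hu hu' hQ.
  have hb' : ((m.*2.+3 * m.*2.+2)%N)%:Z * b%:Z = Q%:Z * a%:Z.
    by have := congr1 Posz hb; rewrite !PoszM.
  have ha : (0 <= a%:Z) by [].
  nia.
have ypos r : (r <= n)%N -> 0 <= y r.
  case: r => [|m] hr //=; rewrite mulr_ge0 // ltW // upos //.
have ymono r : (r < n)%N -> y r <= y r.+1.
  case: r => [|m] hr.
    have := upos 0 hr; rewrite /y bin1 /N => h0; apply: mulr_ege1; [by rewrite lez_nat | by rewrite -gtz0_ge1].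
  have := key m hr; have := ypos m.+1 (ltnW hr); lia.
destruct n as [|m].
  by rewrite ueq big_ord1 subnn expr0 mul1r /y; split=> // ? /eqP.
have hlow : y m.+1 - y m <= u m.+1.
  rewrite ueq alt_rec.
  have /andP [_ h] := @alt y m (fun r hr => ypos r (leqW hr)) (fun r hr => ymono r (ltnW hr)).
  lia.
have h3 : 3 * y m <= y m.+1.
  destruct m as [|m'].
    have := upos 0 (ltnSn 0); rewrite /y /N /= bin1 mulr1 => h; rewrite ler_pMr // -gtz0_ge1.
  have := key m' (ltnSn _); have := ypos m'.+1 (ltnW (ltnSn _)); lia.
have hC : (m.+1.*2.+1 * m.+1.*2 = 2 * 'C(N, m.*2.+1))%N.
  have := binS2 N m.*2.+1; rewrite /N doubleS binn !subSS.
  have e1 : (m.*2.+2 - m.*2 = 2)%N by lia.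
  have e2 : (m.*2.+1 - m.*2 = 1)%N by lia.
  by rewrite e1 e2 !muln1 => ->.
have hyn : y m.+1 = ('C(N, m.*2.+1))%:Z * u m by [].
have hCp : (0 < 'C(N, m.*2.+1))%N by rewrite bin_gt0 /N doubleS; lia.
have hum := upos m (ltnSn m).
split.
  have : 0 < y m.+1 by rewrite hyn mulr_gt0 // ltz_nat.
  lia.
move=> m0 [<-]; rewrite hC PoszM; lia.
Qed.

Section Reidx.
Variables (R : Type) (idx : R) (op : Monoid.com_law idx).
Lemma reindex0 (T : finType) (x : T) (L : {set T}) (P : pred {set T})
    (F : {set T} -> R) : x \notin L ->
  \big[op/idx]_(I : {set T} | [&& I \subset x |: L, x \in I & P I]) F I =
  \big[op/idx]_(J : {set T} | (J \subset L) && P (x |: J)) F (x |: J).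
Proof.
move=> xL.
rewrite (reindex_onto (fun J : {set T} => x |: J) (fun I : {set T} => I :\ x)); last first.
  by move=> I /and3P [_ xI _]; rewrite setD1K.
apply: eq_bigl => J; rewrite setU11 /=.
apply/idP/idP.
  case/andP=> /andP [sJ PJ] /eqP eJ.
  have xJ : x \notin J by rewrite -eJ !inE eqxx.
  rewrite PJ andbT; apply/subsetP => z zJ.
  have : z \in x |: L by apply: (subsetP sJ); rewrite !inE zJ orbT.
  rewrite !inE; case/orP => [/eqP ez|//]; by move: xJ; rewrite -ez zJ.
case/andP => sJL PJ.
have xJ : x \notin J by apply: contra xL; apply: (subsetP sJL).
by rewrite setUS // PJ setU1K ?eqxx.
Qed.
End Reidx.

Lemma sum_by_card (T : finType) (L : {set T}) (F : nat -> int) N : #|L| = N ->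
  \sum_(J : {set T} | (J \subset L) && (J != L)) F #|J| =
  \sum_(i < N) ('C(N, i))%:Z * F i.
Proof.
case: N => [|N] hL.
  rewrite big_ord0 big_pred0 // => J; apply/negbTE; rewrite negb_and negbK.
  case: (boolP (J \subset L)) => //= sJ; rewrite eqEcard sJ hL /=.
  by [].
rewrite (partition_big (fun J : {set T} => inord #|J| : 'I_N.+1) predT) //=.
apply: eq_bigr => i _.
rewrite -[X in 'C(X, _)]hL -cards_draws -sum1_card -[X in X * F i]natz natr_sum mulr_suml.
rewrite [RHS]big_mkcond [LHS]big_mkcond; apply: eq_bigr => J _.
rewrite inE mul1r.
case sJ: (J \subset L) => //=.
have hJ : (#|J| <= #|L|)%N by apply: subset_leq_card.
case: (eqVneq J L) => [->|nJ] /=.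
  rewrite hL; case: eqP => // hi.
  by have := ltn_ord i; rewrite -hi ltnn.
have ltJ : (#|J| < #|L|)%N by apply: proper_card; rewrite properEneq nJ sJ.
rewrite hL in ltJ.
case: (eqVneq (#|J| : nat) (i : nat)) => [hi|ne].
  have -> : inord #|J| = i by apply: val_inj; rewrite /= inordK.
  by rewrite eqxx hi.
case: eqP => // hh; exfalso; move/eqP: ne; apply; rewrite -hh inordK //.
Qed.

Definition val (m : nat) (S : {set 'I_m.+1}) : int :=
  if S == set0 then 1 else if ord0 \in S then sv (#|S|.-1) else 0.

Lemma conn_with0 m (S : {set 'I_m.+1}) : ord0 \in S -> connectedb (star_rel m) S.
Proof.
move=> h0.
have c1 x : x \in S -> connect (induced_rel (star_rel m) S) x ord0.
  move=> hx; case: (eqVneq x ord0) => [->|nx]; first exact: connect0.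
  by apply: connect1; rewrite /induced_rel /star_rel /= hx h0 nx eqxx orbT.
have c2 x : x \in S -> connect (induced_rel (star_rel m) S) ord0 x.
  move=> hx; case: (eqVneq x ord0) => [->|nx]; first exact: connect0.
  by apply: connect1; rewrite /induced_rel /star_rel /= hx h0 eq_sym nx.
apply/forallP => x; apply/implyP => hx; apply/forallP => y; apply/implyP => hy.
exact: connect_trans (c1 x hx) (c2 y hy).
Qed.

Lemma noedge m (S : {set 'I_m.+1}) x y : ord0 \notin S ->
  connect (induced_rel (star_rel m) S) x y -> x = y.
Proof.
move=> h0 /connectP [[|z p] //= pth ->].
case/andP: pth => /and3P [hx hz /andP [_ hor]] _.
by case/orP: hor => /eqP e; [rewrite -e hx in h0 | rewrite -e hz in h0].
Qed.

Lemma sum_val m (S : {set 'I_m.+1}) : ord0 \in S ->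
  \sum_(I in powerset S | I != S) val I =
  1 + \sum_(i < #|S|.-1) ('C(#|S|.-1, i))%:Z * sv i.
Proof.
move=> h0; set L := S :\ ord0.
have hS : S = ord0 |: L by rewrite setD1K.
have hL : ord0 \notin L by rewrite !inE eqxx.
have cL : #|L| = #|S|.-1 by rewrite (cardsD1 ord0 S) h0.
have nS0 : S != set0 by apply/set0Pn; exists ord0.
rewrite (bigID (fun I : {set 'I_m.+1} => ord0 \in I)) /= addrC; congr (_ + _).
  rewrite (bigD1 set0) /=; last by rewrite powersetE sub0set eq_sym nS0 inE.
  rewrite /val eqxx big1 ?addr0 // => I /andP [/andP [/andP [_ _] hI] nI].
  by rewrite (negbTE nI) (negbTE hI).
rewrite (eq_bigl (fun I : {set 'I_m.+1} => [&& I \subset ord0 |: L, ord0 \in I & I != ord0 |: L])); last first.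
  by move=> I; rewrite powersetE -hS -andbA [(I != S) && _]andbC.
rewrite (reindex0 (x:=ord0) (L:=L) _ (fun I : {set 'I_m.+1} => I != ord0 |: L) (@val m) hL).
rewrite -(sum_by_card sv cL).
apply: eq_big => [J|J /andP [sJ _]].
  case sJ: (J \subset L) => //=.
  have hJ : ord0 \notin J by apply: contra hL; apply: (subsetP sJ).
  apply/idP/idP; apply: contra => /eqP e; apply/eqP; first by rewrite e.
  by rewrite -(setU1K hJ) e setU1K.
have hJ : ord0 \notin J by apply: contra hL; apply: (subsetP sJ).
have ne : ord0 |: J != set0 by apply/set0Pn; exists ord0; rewrite setU11.
by rewrite /val (negbTE ne) setU11 cardsU1 hJ.
Qed.

Lemma sa_fuel_val m n (S : {set 'I_m.+1}) :
  (#|S| < n)%N -> sa_fuel (star_rel m) n S = val S.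
Proof.
elim: n S => [|n IH] S // hS.
rewrite /=.
have [->|S0] := eqVneq S set0; first by rewrite /val eqxx.

have cS : (0 < #|S|)%N by rewrite card_gt0.
case h0: (ord0 \in S).
  rewrite conn_with0 // /val (negbTE S0) h0.
  case: ifP => hodd.
    by rewrite sv_even //; move: hodd; rewrite -(prednK cS).
  have ho : odd #|S|.-1 by move: hodd; rewrite -(prednK cS) /= => /negbFE.
  rewrite (eq_bigr (@val m)) => [|I /andP [hI nI]]; last first.
    apply: IH; suff : (#|I| < #|S|)%N by lia.
    by apply: proper_card; rewrite properEneq nI -powersetE.
  by rewrite sum_val // (sv_odd ho).
rewrite /val (negbTE S0) h0.
have [x xS] := set0Pn _ S0.
have xn0 : x != ord0 by apply: contraNneq (negbT h0) => <-.
have conn1 z (h : S = [set z]) : connectedb (star_rel m) S.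
  apply/forallP => a; apply/implyP => ha; apply/forallP => b; apply/implyP => hb.
  by move: ha hb; rewrite h !inE => /eqP -> /eqP ->; apply: connect0.
case: ifP => conn.
  have hS1 : S = [set x].
    apply/setP => y; rewrite inE; apply/idP/eqP => [yS|->//].
    move/forallP: conn => /(_ x) /implyP /(_ xS) /forallP /(_ y) /implyP /(_ yS).
    by move/(noedge (negbT h0)).
  by rewrite hS1 cards1.
have cx : [set y in S | connect (induced_rel (star_rel m) S) x y] = [set x].
  apply/setP => y; rewrite !inE; apply/andP/eqP => [[yS c]|->].
    by rewrite (noedge (negbT h0) c).
  by rewrite xS connect0.
have xc : [set x] \in components (star_rel m) S.
  by rewrite -cx; apply: imset_f.
have n2 : (1 < n)%N.
  case: (ltnP 1 n) => // hn; exfalso.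
  have : #|S| == 1%N by rewrite eqn_leq cS andbT; apply: leq_trans hn; rewrite -ltnS.
  by case/cards1P => z hz; move: conn; rewrite (conn1 z hz).
rewrite (bigD1 [set x]) //= IH ?cards1 // /val.
have ne : [set x] != set0 by apply/set0Pn; exists x; rewrite set11.
by rewrite (negbTE ne) inE eq_sym (negbTE xn0) mul0r.
Qed.

Lemma a_i_star m i :
  a_i (star_rel m) i.+1 = ('C(m, i.*2.+1) * `|sv i.*2.+1|)%N.
Proof.
rewrite /a_i /a_num.
rewrite (eq_bigr (fun I => `|val I|%N)) => [|I _]; last by rewrite /sa sa_fuel_val.
rewrite (bigID (fun I : {set 'I_m.+1} => ord0 \in I)) /=.
rewrite [X in (_ + X)%N]big1 ?addn0; last first.
  move=> I /andP [/eqP hI h0]; rewrite /val (negbTE h0).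
  have : I != set0 by rewrite -card_gt0 hI mul2n doubleS.
  by move/negbTE => ->.
set L := [set~ (ord0 : 'I_m.+1)].
have hL : ord0 \notin L by rewrite !inE eqxx.
have hT : ord0 |: L = setT by rewrite setUCr.
rewrite (eq_bigl (fun I : {set 'I_m.+1} => [&& I \subset ord0 |: L, ord0 \in I & #|I| == (2 * i.+1)%N])); last first.
  by move=> I; rewrite hT subsetT andbC.
rewrite (reindex0 (x:=ord0) (L:=L) _ (fun I : {set 'I_m.+1} => #|I| == (2 * i.+1)%N) (fun I => `|val I|%N) hL).
rewrite (eq_big (fun J : {set 'I_m.+1} => (J \subset L) && (#|J| == i.*2.+1)) (fun _ => `|sv i.*2.+1|%N)); first last.
- move=> J /andP [sJ /eqP cJ].
  have hJ : ord0 \notin J by apply: contra hL; apply: (subsetP sJ).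
  have ne : ord0 |: J != set0 by apply/set0Pn; exists ord0; rewrite setU11.
  by rewrite /val (negbTE ne) setU11 cJ mul2n doubleS.
- move=> J; case sJ: (J \subset L) => //=.
  have hJ : ord0 \notin J by apply: contra hL; apply: (subsetP sJ).
  by rewrite cardsU1 hJ mul2n doubleS eqSS.
rewrite sum_nat_cond_const cards_draws cardsC1 card_ord mulnC.
by [].
Qed.

Lemma abs_sv i : (`|sv i.*2.+1|%N : int) = u i.
Proof.
have hu := (u_main i).1.
by rewrite abszE -[RHS]gtr0_norm // /u normrM normrX normrN1 expr1n mul1r.
Qed.

Local Close Scope ring_scope.

Theorem mainTheorem12 (k : nat) (hk : 3 <= k) :
  a_i (star_rel (2 * k)) k.-1 < a_i (star_rel (2 * k)) k.
Proof.
have [j ->] : exists j, k = j.+2 by exists k.-2; lia.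
rewrite /= !a_i_star -ltz_nat !PoszM !abs_sv.
have [_ h] := u_main j.+1; have h' := h j erefl.
have p1 := (u_main j).1.
have hb := binS2 (2 * j.+2) j.*2.+1.
have e1 : 2 * j.+2 - j.*2.+1 = 3 by lia.
have e2 : 2 * j.+2 - j.*2.+2 = 2 by lia.
rewrite e1 e2 in hb.
have hC : 0 < 'C(2 * j.+2, j.*2.+3) by rewrite bin_gt0; lia.
move: h' hb hC; rewrite !doubleS.
set C1 := 'C(_, j.*2.+1); set C2 := 'C(_, j.*2.+3).
move=> h' hb hC.
have hb' : (Posz (j.*2.+3 * j.*2.+2) * Posz C2 = Posz 6 * Posz C1)%R.
  by have := congr1 Posz hb; rewrite !PoszM.
have hC' : (0 < Posz C2)%R by rewrite ltz_nat.
nia.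
Qed.
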